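(* Let $X$ be a Hilbert space and let $B$ be a bounded self-adjoint operator on $X$ with spectral radius $\rho(B)=\|B\|=1$ such that $-1$ is not an eigenvalue of $B$. Let $f\in X$ and suppose the equation $x=Bx+f$ has at least one solution in $X$. Let $P$ be the orthogonal projection onto $\ker(I-B)$ (the eigenspace of $B$ for the eigenvalue $1$). Then for every initial point $x_0\in X$ the successive approximations $x_{n+1}=Bx_n+f$ ($n=0,1,2,\dots$) converge in norm to a solution of $x=Bx+f$; more precisely, they converge to the (unique) solution $x_*$ of $x=Bx+f$ satisfying $Px_*=Px_0$.
   Context: $I$ denotes the identity operator on $X$. *)

(* Defs.v *)
From Stdlib Require Import Reals Lra.
Open Scope R_scope.

Record Hilbert := {
  hcar :> Type;
  hzero : hcar;
  hadd : hcar -> hcar -> hcar;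
  hopp : hcar -> hcar;
  hscal : R -> hcar -> hcar;
  hinner : hcar -> hcar -> R;
  hadd_assoc : forall x y z, hadd x (hadd y z) = hadd (hadd x y) z;
  hadd_comm : forall x y, hadd x y = hadd y x;
  hadd_0l : forall x, hadd hzero x = x;
  hadd_oppr : forall x, hadd x (hopp x) = hzero;
  hscal_assoc : forall a b x, hscal a (hscal b x) = hscal (a * b) x;
  hscal_1 : forall x, hscal 1 x = x;
  hscal_addr : forall a x y, hscal a (hadd x y) = hadd (hscal a x) (hscal a y);
  hscal_addl : forall a b x, hscal (a + b) x = hadd (hscal a x) (hscal b x);
  hinner_sym : forall x y, hinner x y = hinner y x;
  hinner_addl : forall x y z, hinner (hadd x y) z = hinner x z + hinner y z;
  hinner_scall : forall a x y, hinner (hscal a x) y = a * hinner x y;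
  hinner_pos : forall x, 0 <= hinner x x;
  hinner_def : forall x, hinner x x = 0 -> x = hzero;
  hcomplete : forall u : nat -> hcar,
    (forall eps, eps > 0 -> exists N, forall n m, (n >= N)%nat -> (m >= N)%nat ->
        sqrt (hinner (hadd (u n) (hopp (u m))) (hadd (u n) (hopp (u m)))) < eps) ->
    exists l, forall eps, eps > 0 -> exists N, forall n, (n >= N)%nat ->
        sqrt (hinner (hadd (u n) (hopp l)) (hadd (u n) (hopp l))) < eps
}.

Arguments hzero {h}.
Arguments hadd {h}.
Arguments hopp {h}.
Arguments hscal {h}.
Arguments hinner {h}.

Definition hsub {X : Hilbert} (x y : X) : X := hadd x (hopp y).
Definition hnorm {X : Hilbert} (x : X) : R := sqrt (hinner x x).

Definition hconverges {X : Hilbert} (u : nat -> X) (l : X) : Prop :=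
  forall eps, eps > 0 -> exists N, forall n, (n >= N)%nat -> hnorm (hsub (u n) l) < eps.

Definition is_linear {X : Hilbert} (T : X -> X) : Prop :=
  (forall x y, T (hadd x y) = hadd (T x) (T y)) /\
  (forall a x, T (hscal a x) = hscal a (T x)).

Definition is_bounded_linear {X : Hilbert} (T : X -> X) : Prop :=
  is_linear T /\ exists M, forall x, hnorm (T x) <= M * hnorm x.

Definition op_norm_is {X : Hilbert} (T : X -> X) (c : R) : Prop :=
  is_lub (fun r => exists x : X, hnorm x <= 1 /\ r = hnorm (T x)) c.

Definition self_adjoint {X : Hilbert} (T : X -> X) : Prop :=
  forall x y, hinner (T x) y = hinner x (T y).

Definition resolvent {X : Hilbert} (T : X -> X) (lam : R) : Prop :=
  exists S : X -> X, is_bounded_linear S /\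
    (forall x, S (hsub (T x) (hscal lam x)) = x) /\
    (forall x, hsub (T (S x)) (hscal lam (S x)) = x).

Definition spectrum {X : Hilbert} (T : X -> X) (lam : R) : Prop :=
  ~ resolvent T lam.

Definition spectral_radius_is {X : Hilbert} (T : X -> X) (r : R) : Prop :=
  is_lub (fun s => exists lam, spectrum T lam /\ s = Rabs lam) r.

Definition is_eigenvalue {X : Hilbert} (T : X -> X) (lam : R) : Prop :=
  exists x : X, x <> hzero /\ T x = hscal lam x.

Definition fixed_space {X : Hilbert} (T : X -> X) (x : X) : Prop := T x = x.

Definition is_orth_proj {X : Hilbert} (K : X -> Prop) (P : X -> X) : Prop :=
  forall x, K (P x) /\ (forall y, K y -> hinner (hsub x (P x)) y = 0).

Fixpoint iterates {X : Hilbert} (T : X -> X) (f x0 : X) (n : nat) : X :=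
  match n with
  | O => x0
  | S k => hadd (T (iterates T f x0 k)) f
  end.

(* Main.v *)
Require Import Defs.
From Stdlib Require Import Reals Lra Lia.
Open Scope R_scope.

Definition q {X : Hilbert} (x : X) : R := hinner x x.

Lemma hadd_0r (X : Hilbert) (x : X) : hadd x hzero = x.
Proof. rewrite hadd_comm; apply hadd_0l. Qed.
Lemma hadd_oppl (X : Hilbert) (x : X) : hadd (hopp x) x = hzero.
Proof. rewrite hadd_comm; apply hadd_oppr. Qed.
Lemma add_cancel (X : Hilbert) (a b c : X) : hadd a b = hadd a c -> b = c.
Proof.
  intros H.
  assert (E: hadd (hopp a) (hadd a b) = hadd (hopp a) (hadd a c)) by now rewrite H.
  rewrite !hadd_assoc, hadd_oppl, !hadd_0l in E. exact E.
Qed.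
Lemma hscal0 (X : Hilbert) (x : X) : hscal 0 x = hzero.
Proof.
  apply (add_cancel _ (hscal 0 x)). rewrite <- hscal_addl, Rplus_0_r, hadd_0r. reflexivity.
Qed.
Lemma hopp_unique (X : Hilbert) (a b : X) : hadd a b = hzero -> b = hopp a.
Proof. intros H. apply (add_cancel _ a). rewrite H, hadd_oppr. reflexivity. Qed.
Lemma hscal_m1 (X : Hilbert) (x : X) : hscal (-1) x = hopp x.
Proof.
  apply hopp_unique. rewrite <- (hscal_1 _ x) at 1. rewrite <- hscal_addl.
  replace (1 + -1) with 0 by ring. apply hscal0.
Qed.
Lemma hopp_opp (X : Hilbert) (x : X) : hopp (hopp x) = x.
Proof. symmetry; apply hopp_unique; apply hadd_oppl. Qed.
Lemma hopp_add (X : Hilbert) (a b : X) : hopp (hadd a b) = hadd (hopp a) (hopp b).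
Proof.
  symmetry; apply hopp_unique.
  rewrite (hadd_comm _ (hopp a)), hadd_assoc, <- (hadd_assoc _ a b (hopp b)), hadd_oppr, hadd_0r, hadd_oppr.
  reflexivity.
Qed.
Lemma sub_eq0 (X : Hilbert) (a b : X) : hsub a b = hzero -> a = b.
Proof. unfold hsub; intros H. apply hopp_unique in H. rewrite <- (hopp_opp _ b), H, hopp_opp. reflexivity. Qed.
Lemma sub_self (X : Hilbert) (a : X) : hsub a a = hzero.
Proof. apply hadd_oppr. Qed.
Lemma hopp0 (X : Hilbert) : hopp (@hzero X) = hzero.
Proof. symmetry; apply hopp_unique; apply hadd_0l. Qed.

Lemma hinner_addr (X : Hilbert) (x y z : X) : hinner x (hadd y z) = hinner x y + hinner x z.
Proof. rewrite hinner_sym, hinner_addl, (hinner_sym _ y), (hinner_sym _ z); reflexivity. Qed.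
Lemma hinner_scalr (X : Hilbert) a (x y : X) : hinner x (hscal a y) = a * hinner x y.
Proof. rewrite hinner_sym, hinner_scall, hinner_sym; reflexivity. Qed.
Lemma hinner_oppl (X : Hilbert) (x y : X) : hinner (hopp x) y = - hinner x y.
Proof. rewrite <- hscal_m1, hinner_scall; ring. Qed.
Lemma hinner_oppr (X : Hilbert) (x y : X) : hinner x (hopp y) = - hinner x y.
Proof. rewrite <- hscal_m1, hinner_scalr; ring. Qed.
Lemma hinner_subl (X : Hilbert) (a b k : X) : hinner (hsub a b) k = hinner a k - hinner b k.
Proof. unfold hsub; rewrite hinner_addl, hinner_oppl; ring. Qed.
Lemma hinner_subr (X : Hilbert) (a b k : X) : hinner k (hsub a b) = hinner k a - hinner k b.
Proof. unfold hsub; rewrite hinner_addr, hinner_oppr; ring. Qed.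
Lemma q_sub (X : Hilbert) (a b : X) : q (hsub a b) = q a - 2 * hinner a b + q b.
Proof. unfold q; rewrite hinner_subl, !hinner_subr, (hinner_sym _ b a); ring. Qed.
Lemma q_add (X : Hilbert) (a b : X) : q (hadd a b) = q a + 2 * hinner a b + q b.
Proof. unfold q; rewrite hinner_addl, !hinner_addr, (hinner_sym _ b a); ring. Qed.
Lemma q_nonneg (X : Hilbert) (a : X) : 0 <= q a.
Proof. apply hinner_pos. Qed.
Lemma q_add_le (X : Hilbert) (a b : X) : q (hadd a b) <= 2 * q a + 2 * q b.
Proof. pose proof (q_nonneg _ (hsub a b)). rewrite q_sub in H. rewrite q_add. lra. Qed.
Lemma q_sub_sym (X : Hilbert) (a b : X) : q (hsub a b) = q (hsub b a).
Proof. rewrite !q_sub, hinner_sym; ring. Qed.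
Lemma q_scal (X : Hilbert) c (x : X) : q (hscal c x) = c * c * q x.
Proof. unfold q; rewrite hinner_scall, hinner_scalr; ring. Qed.
Lemma q_zero (X : Hilbert) : q (@hzero X) = 0.
Proof. unfold q. rewrite <- (hscal0 _ hzero), hinner_scall; ring. Qed.
Lemma q_eq0 (X : Hilbert) (x : X) : q x = 0 -> x = hzero.
Proof. apply hinner_def. Qed.
Lemma inner_bound (X : Hilbert) (a k : X) t :
  2 * t * hinner a k <= t * t * q a + q k /\ - (2 * t * hinner a k) <= t * t * q a + q k.
Proof.
  pose proof (q_nonneg _ (hsub (hscal t a) k)). pose proof (q_nonneg _ (hadd (hscal t a) k)).
  rewrite q_sub, q_scal, hinner_scall in H. rewrite q_add, q_scal, hinner_scall in H0. lra.
Qed.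

Lemma lin0 (X : Hilbert) (B : X -> X) : is_linear B -> B hzero = hzero.
Proof. intros [_ HS]. rewrite <- (hscal0 _ hzero), HS, !hscal0. reflexivity. Qed.
Lemma lin_opp (X : Hilbert) (B : X -> X) x : is_linear B -> B (hopp x) = hopp (B x).
Proof. intros [HA HS]. rewrite <- !hscal_m1, HS. reflexivity. Qed.
Lemma lin_sub (X : Hilbert) (B : X -> X) a b : is_linear B -> B (hsub a b) = hsub (B a) (B b).
Proof. intros HL. unfold hsub. rewrite (proj1 HL), lin_opp; auto. Qed.

Lemma lin_contr (X : Hilbert) (B : X -> X) : is_linear B -> op_norm_is B 1 ->
  forall x, q (B x) <= q x.
Proof.
  intros HL [Hub _] x.
  destruct (Req_dec (q x) 0) as [H0|H0].
  - apply q_eq0 in H0. subst x. rewrite lin0 by auto. rewrite q_zero; lra.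
  - pose proof (q_nonneg _ x) as Hq.
    set (s := sqrt (q x)).
    assert (Hs : 0 < s) by (apply sqrt_lt_R0; lra).
    assert (Hss : s * s = q x) by (apply sqrt_sqrt; lra).
    assert (Hx' : hnorm (hscal (/ s) x) <= 1).
    { unfold hnorm. fold (q (hscal (/ s) x)). rewrite q_scal.
      replace (/ s * / s * q x) with 1 by (rewrite <- Hss; field; lra). rewrite sqrt_1; lra. }
    assert (Hb : hnorm (B (hscal (/ s) x)) <= 1).
    { apply Hub. exists (hscal (/ s) x). split; auto. }
    rewrite (proj2 HL) in Hb. unfold hnorm in Hb. fold (q (hscal (/s) (B x))) in Hb.
    rewrite q_scal in Hb.
    assert (Ht : / s * / s * q (B x) <= 1).
    { apply sqrt_le_0. apply Rmult_le_pos; [apply Rmult_le_pos; left; apply Rinv_0_lt_compat; lra| apply q_nonneg]. lra. rewrite sqrt_1; exact Hb. }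
    replace (q (B x)) with ((s * s) * (/ s * / s * q (B x))) by (field; lra).
    rewrite <- Hss. rewrite <- (Rmult_1_r (s*s)) at 2.
    apply Rmult_le_compat_l; [nra|exact Ht].
Qed.

Fixpoint bp {X : Hilbert} (B : X -> X) (k : nat) (x : X) : X :=
  match k with O => x | S k => B (bp B k x) end.

Lemma bp_add (X : Hilbert) (B : X -> X) a b x : bp B (a + b) x = bp B a (bp B b x).
Proof. induction a; simpl; congruence. Qed.
Lemma bp_comm (X : Hilbert) (B : X -> X) j x : bp B j (B x) = B (bp B j x).
Proof. induction j; simpl; congruence. Qed.
Lemma bp_sub (X : Hilbert) (B : X -> X) k a b : is_linear B ->
  bp B k (hsub a b) = hsub (bp B k a) (bp B k b).
Proof. intros HL; induction k; simpl; auto. rewrite IHk, lin_sub; auto. Qed.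
Lemma bp_fixed (X : Hilbert) (B : X -> X) j k : B k = k -> bp B j k = k.
Proof. intros H; induction j; simpl; congruence. Qed.
Lemma bp_sa (X : Hilbert) (B : X -> X) j x y : self_adjoint B ->
  hinner (bp B j x) y = hinner x (bp B j y).
Proof.
  intros HS. revert y; induction j; intros y; simpl; auto.
  rewrite HS, IHj, bp_comm. reflexivity.
Qed.
Lemma inner_shift (X : Hilbert) (B : X -> X) a b c z : self_adjoint B ->
  hinner (bp B (a + c) z) (bp B b z) = hinner (bp B a z) (bp B (c + b) z).
Proof.
  intros HS. rewrite Nat.add_comm, !bp_add, bp_sa by auto. reflexivity.
Qed.
Lemma inner_even (X : Hilbert) (B : X -> X) n m z : self_adjoint B ->
  hinner (bp B (n + n) z) (bp B (m + m) z) = q (bp B (n + m) z).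
Proof.
  intros HS. unfold q.
  destruct (Nat.le_ge_cases n m) as [H|H].
  - replace (m + m)%nat with ((m - n) + (n + m))%nat by lia.
    rewrite <- inner_shift by auto. f_equal. f_equal. lia.
  - rewrite hinner_sym.
    replace (n + n)%nat with ((n - m) + (n + m))%nat by lia.
    rewrite <- inner_shift by auto. f_equal. f_equal. lia.
Qed.

Lemma le_eps (a : R) : (forall e, e > 0 -> a <= e) -> a <= 0.
Proof. intros H. destruct (Rle_lt_dec a 0); auto. specialize (H (a/2)). lra. Qed.

Lemma small_inner (X : Hilbert) (k : X) c :
  (forall e, e > 0 -> exists a : X, q a < e /\ hinner a k = c) -> c = 0.
Proof.
  intros H. pose proof (q_nonneg _ k) as Hk.
  destruct (Rtotal_order c 0) as [Hc|[Hc|Hc]]; auto; exfalso.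
  - set (t := 2 * (q k + 1) / (- c)).
    assert (Ht : 0 < t) by (unfold t; apply Rdiv_lt_0_compat; lra).
    destruct (H ((-c) / t)) as [a [Ha Hac]]. apply Rdiv_lt_0_compat; lra.
    destruct (inner_bound _ a k t) as [_ H2]. rewrite Hac in H2.
    assert (t * t * q a <= t * t * ((-c)/t)) by (apply Rmult_le_compat_l; nra).
    assert (E1 : t * t * ((-c)/t) = t * (-c)) by (field; lra).
    assert (E2 : t * (-c) = 2 * (q k + 1)) by (unfold t; field; lra).
    lra.
  - set (t := 2 * (q k + 1) / c).
    assert (Ht : 0 < t) by (unfold t; apply Rdiv_lt_0_compat; lra).
    destruct (H (c / t)) as [a [Ha Hac]]. apply Rdiv_lt_0_compat; lra.
    destruct (inner_bound _ a k t) as [H2 _]. rewrite Hac in H2.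
    assert (t * t * q a <= t * t * (c/t)) by (apply Rmult_le_compat_l; nra).
    assert (E1 : t * t * (c/t) = t * c) by (field; lra).
    assert (E2 : t * c = 2 * (q k + 1)) by (unfold t; field; lra).
    lra.
Qed.

Lemma q_to_norm (X : Hilbert) (a : X) eps : eps > 0 -> q a < eps * eps -> hnorm a < eps.
Proof.
  intros He H. unfold hnorm. fold (q a).
  rewrite <- (sqrt_square eps) by lra. apply sqrt_lt_1_alt. split; auto. apply q_nonneg.
Qed.

Lemma core (X : Hilbert) (B : X -> X) (HL : is_linear B) (HS : self_adjoint B)
  (Hc : forall x, q (B x) <= q x) (Hneg : ~ is_eigenvalue B (-1)) (z : X) :
  exists y, B y = y /\
    (forall e, e > 0 -> exists N, forall n, (n >= N)%nat -> q (hsub (bp B n z) y) < e) /\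
    (forall k, B k = k -> hinner y k = hinner z k).
Proof.
  set (d := fun k => q (bp B k z)).
  destruct (decreasing_cv d) as [L HLc].
  { intros n. unfold d. simpl. apply Hc. }
  { exists 0. intros r [n Hn]. unfold opp_seq in Hn. subst r. pose proof (q_nonneg _ (bp B n z)).
    unfold d. lra. }
  set (u := fun n => bp B (n + n) z).
  assert (Hqu : forall n m, q (hsub (u n) (u m)) = d (n + n)%nat - 2 * d (n + m)%nat + d (m + m)%nat).
  { intros n m. unfold u, d. rewrite q_sub, inner_even by auto. reflexivity. }
  destruct (hcomplete X u) as [y Hy].
  { intros eps He. destruct (HLc (eps * eps / 4)) as [N HN]. nra.
    exists N. intros n m Hn Hm. fold (hsub (u n) (u m)). fold (hnorm (hsub (u n) (u m))).
    apply q_to_norm; auto. rewrite Hqu.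
    pose proof (HN (n+n)%nat ltac:(lia)). pose proof (HN (n+m)%nat ltac:(lia)).
    pose proof (HN (m+m)%nat ltac:(lia)). unfold Rdist in *.
    apply Rabs_def2 in H. apply Rabs_def2 in H0. apply Rabs_def2 in H1. lra. }
  assert (Hyq : forall e, e > 0 -> exists N, forall n, (n >= N)%nat -> q (hsub (u n) y) < e).
  { intros e He. destruct (Hy (sqrt e)) as [N HN]. apply sqrt_lt_R0; lra.
    exists N. intros n Hn. specialize (HN n Hn). fold (hsub (u n) y) in HN.
    apply sqrt_lt_0_alt. exact HN. }
  assert (HuS : forall n, u (S n) = B (B (u n))).
  { intros n. unfold u. simpl. rewrite <- plus_n_Sm. reflexivity. }
  assert (HB2 : B (B y) = y).
  { apply sub_eq0, q_eq0. apply Rle_antisym; [|apply q_nonneg].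
    apply le_eps. intros e He. destruct (Hyq (e/4)) as [N HN]. lra.
    assert (E : hsub (B (B y)) y = hadd (hsub (B (B y)) (u (S N))) (hsub (u (S N)) y)).
    { unfold hsub. rewrite <- hadd_assoc, (hadd_assoc _ (hopp _)), hadd_oppl, hadd_0l. reflexivity. }
    rewrite E. eapply Rle_trans. apply q_add_le.
    rewrite HuS, <- !lin_sub by auto.
    pose proof (Hc (B (hsub y (u N)))). pose proof (Hc (hsub y (u N))).
    rewrite q_sub_sym in H0. pose proof (HN N ltac:(lia)). pose proof (HN (S N) ltac:(lia)).
    rewrite HuS in H2. lra. }
  assert (HBy : B y = y).
  { set (w := hsub (B y) y).
    destruct (Req_dec (q w) 0) as [E|E].
    - apply q_eq0 in E. apply sub_eq0. exact E.
    - exfalso. apply Hneg. exists w. split.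
      + intros Hw. rewrite Hw, q_zero in E. lra.
      + unfold w. rewrite lin_sub, HB2, hscal_m1 by auto. unfold hsub.
        rewrite hopp_add, hopp_opp, hadd_comm. reflexivity. }
  exists y. split; [exact HBy|split].
  - intros e He. destruct (Hyq e He) as [N HN]. exists (N + N)%nat. intros n Hn.
    destruct (Nat.Even_or_Odd n) as [[j Hj]|[j Hj]].
    + replace n with (j + j)%nat by lia. apply HN. lia.
    + replace n with (S (j + j)) by lia. simpl.
      replace (hsub (B (bp B (j + j) z)) y) with (B (hsub (bp B (j+j) z) y))
        by (rewrite lin_sub, HBy by auto; reflexivity).
      eapply Rle_lt_trans. apply Hc. apply HN. lia.
  - intros k Hk.
    assert (Hc0 : hinner y k - hinner z k = 0).
    { apply (small_inner _ k). intros e He. destruct (Hyq e He) as [N HN].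
      exists (hsub y (u N)). split.
      + rewrite q_sub_sym. apply HN. lia.
      + rewrite hinner_subl. unfold u. rewrite bp_sa, bp_fixed by auto. reflexivity. }
    lra.
Qed.

Lemma add_sub_cancel (X : Hilbert) (a b : X) : hadd b (hsub a b) = a.
Proof. unfold hsub. rewrite hadd_comm, <- hadd_assoc, hadd_oppl, hadd_0r. reflexivity. Qed.
Lemma add_swap (X : Hilbert) (a b c : X) : hadd (hadd a b) c = hadd (hadd a c) b.
Proof. rewrite <- !hadd_assoc, (hadd_comm _ b c). reflexivity. Qed.
Lemma sub_addl (X : Hilbert) (a b c : X) : hsub (hadd c a) (hadd c b) = hsub a b.
Proof.
  unfold hsub. rewrite hopp_add, (hadd_comm _ c a), <- hadd_assoc, (hadd_assoc _ c), hadd_oppr, hadd_0l.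
  reflexivity.
Qed.
Lemma sub_addr (X : Hilbert) (a b c : X) : hsub (hadd a c) (hadd b c) = hsub a b.
Proof. rewrite (hadd_comm _ a), (hadd_comm _ b). apply sub_addl. Qed.
Lemma vanish (X : Hilbert) (K : X -> Prop) (v : X) : K v -> (forall k, K k -> hinner v k = 0) -> v = hzero.
Proof. intros Hv H. apply q_eq0. apply H. exact Hv. Qed.

Theorem theorem1p1 (X : Hilbert) (B : X -> X) (f : X) (P : X -> X)
  (HBlin : is_bounded_linear B)
  (HBsa : self_adjoint B)
  (Hrho : spectral_radius_is B 1)
  (Hnorm : op_norm_is B 1)
  (Hneg : ~ is_eigenvalue B (-1))
  (Hsol : exists x : X, x = hadd (B x) f)
  (HP : is_orth_proj (fixed_space B) P) :
  forall x0 : X,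
    exists xs : X,
      xs = hadd (B xs) f /\ P xs = P x0 /\
      (forall y : X, y = hadd (B y) f -> P y = P x0 -> y = xs) /\
      hconverges (iterates B f x0) xs.
Proof.
  destruct HBlin as [HL _].
  pose proof (lin_contr _ B HL Hnorm) as Hc.
  destruct Hsol as [xh Hxh]. intros x0.
  set (z := hsub x0 xh).
  destruct (core X B HL HBsa Hc Hneg z) as [y [HBy [Hconv Horth]]].
  assert (Hit : forall n, iterates B f x0 n = hadd xh (bp B n z)).
  { induction n; simpl.
    - unfold z. rewrite add_sub_cancel. reflexivity.
    - rewrite IHn, (proj1 HL), add_swap, <- Hxh. reflexivity. }
  assert (Hxs : hadd xh y = hadd (B (hadd xh y)) f).
  { rewrite (proj1 HL), add_swap, <- Hxh, HBy. reflexivity. }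
  assert (Hsubfix : forall a b, fixed_space B a -> fixed_space B b -> fixed_space B (hsub a b)).
  { intros a b Ha Hb. unfold fixed_space in *. rewrite lin_sub, Ha, Hb by auto. reflexivity. }
  assert (HPk : forall x k, fixed_space B k -> hinner x k = hinner (P x) k).
  { intros x k Hk. destruct (HP x) as [_ H]. specialize (H k Hk). rewrite hinner_subl in H. lra. }
  assert (Hxs0 : forall k, fixed_space B k -> hinner (hadd xh y) k = hinner x0 k).
  { intros k Hk. rewrite hinner_addl, Horth by exact Hk. unfold z. rewrite hinner_subl. ring. }
  assert (HPeq : P (hadd xh y) = P x0).
  { apply sub_eq0. apply (vanish _ (fixed_space B)).
    - apply Hsubfix; apply HP.
    - intros k Hk. rewrite hinner_subl, <- !HPk, Hxs0 by auto. ring. }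
  exists (hadd xh y). split; [exact Hxs|split; [exact HPeq|split]].
  - intros y' Hy' HPy'. apply sub_eq0. apply (vanish _ (fixed_space B)).
    + unfold fixed_space. rewrite lin_sub by auto.
      rewrite <- (sub_addr _ _ _ f). rewrite <- Hy', <- Hxs. reflexivity.
    + intros k Hk. rewrite hinner_subl, (HPk y'), (HPk (hadd xh y)), HPy', HPeq by auto. ring.
  - intros eps He. destruct (Hconv (eps * eps)) as [N HN]. nra.
    exists N. intros n Hn. rewrite Hit, sub_addl. apply q_to_norm; auto.
Qed.
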